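(* In the two-door cascading memoryless semi-fractional setting, there is an optimal semi-fractional sequence $\pi^\star$ (i.e. $\mathbb{E}[\pi^\star]\le\mathbb{E}[\pi]$ for every semi-fractional sequence $\pi$) of the form $1^s(2\,1^t)^\infty$ for some positive reals $s,t$, and its expected running time is $$\mathbb{E}[\pi^\star]=\min_{z\in[0,1]}\left(\log_{q_1}(1-z)+\frac{c+(1-p_2z)\log_{q_1}(1-p_2z)}{p_2z}\right).$$
   Context: Two cascading memoryless doors with durations: parameters $p_1,p_2\in(0,1)$, $q_1=1-p_1$, $q_2=1-p_2$, and $c>0$. Both doors start closed. A semi-fractional sequence is an infinite alternating sequence of knocks $1^{t_1}\,2\,1^{t_2}\,2\cdots$ with real $t_j\ge0$. A 1-knock $1^t$ takes $t$ time units and, if door 1 is closed, opens it with probability $1-q_1^t$, independently of everything else. A 2-knock takes $c$ time units and opens door 2 with probability $p_2$ (independently) if door 1 is open at that time, and with probability $0$ otherwise. There is no feedback. The running time is the time at which both doors are open, and $\mathbb{E}[\pi]$ is its expectation for sequence $\pi$. $(2\,1^t)^\infty$ denotes infinite repetition. *)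

(* Defs.v *)
From HB Require Import structures.
From mathcomp Require Import all_boot all_order all_algebra.
From mathcomp Require Import all_classical all_reals all_analysis.
Set Implicit Arguments. Unset Strict Implicit. Unset Printing Implicit Defensive.
Import Order.TTheory GRing.Theory Num.Theory numFieldNormedType.Exports.
Local Open Scope ring_scope.

Section Doors.
Variable R : realType.

(* A semi-fractional sequence 1^{t_1} 2 1^{t_2} 2 ... is encoded by
   pi : nat -> R with pi j = t_{j+1} (0-indexed); it is admissible when
   every t_j >= 0. *)
Definition semi_fractional (pi : nat -> R) : Prop := forall j, 0 <= pi j.

(* total 1-knock time before the n-th 2-knock (n >= 1): t_1 + ... + t_n *)
Definition Usum (pi : nat -> R) (n : nat) : R := \sum_(i < n) pi i.

(* time at which the n-th 2-knock ends *)
Definition tau (c : R) (pi : nat -> R) (n : nat) : R := Usum pi n + n%:R * c.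

(* P(door 1 still closed after the first n 1-knocks) = q1^(t_1+...+t_n) *)
Definition closed1 (p1 : R) (pi : nat -> R) (n : nat) : R :=
  (1 - p1) `^ (Usum pi n).

(* P(door 1 first found open at the k-th 2-knock), k >= 1 *)
Definition first_open (p1 : R) (pi : nat -> R) (k : nat) : R :=
  closed1 p1 pi k.-1 - closed1 p1 pi k.

(* P(running time = tau n), n >= 1: door 1 first found open at the k-th
   2-knock (1 <= k <= n), 2-knocks k..n-1 fail, 2-knock n succeeds. *)
Definition prob_run (p1 p2 : R) (pi : nat -> R) (n : nat) : R :=
  \sum_(1 <= k < n.+1) first_open p1 pi k * p2 * (1 - p2) ^+ (n - k).

(* P(running time = +oo) = P(door 1 never opens) = lim_n q1^(U n). *)
Definition prob_never (p1 : R) (pi : nat -> R) : R := limn (closed1 p1 pi).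

(* Expected running time E[pi] in the extended reals:
   sum_{n>=1} tau_n P(R = tau_n) + (+oo) * P(R = +oo)  (with +oo * 0 = 0). *)
Definition expected_time (p1 p2 c : R) (pi : nat -> R) : \bar R :=
  ((\sum_(0 <= n <oo) (tau c pi n.+1 * prob_run p1 p2 pi n.+1)%:E)
   + +oo * (prob_never p1 pi)%:E)%E.

Definition periodic_seq (s t : R) : nat -> R := fun j => if j == 0%N then s else t.

Definition logb (q x : R) : R := ln x / ln q.

Definition objective (p1 p2 c z : R) : R :=
  logb (1 - p1) (1 - z)
  + (c + (1 - p2 * z) * logb (1 - p1) (1 - p2 * z)) / (p2 * z).

End Doors.

(* Main.v *)
Require Import Defs.
From HB Require Import structures.
From mathcomp Require Import all_boot all_order all_algebra.
From mathcomp Require Import all_classical all_reals all_analysis.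
From mathcomp Require Import ring lra.
Import Order.TTheory GRing.Theory Num.Theory numFieldNormedType.Exports.
Set Implicit Arguments. Unset Strict Implicit.
Local Open Scope ring_scope.

Lemma step_ineq (R : realType) (p1 p2 c V A X : R) :
  0 < p1 < 1 -> 0 < p2 < 1 -> 0 < c ->
  (forall z, 0 < z < 1 -> V <= objective p1 p2 c z) ->
  0 < X -> X <= A -> forall A', A' = (1 - p2) * A + p2 * X ->
  (A - A') * V <= (A - A') * (ln X / ln (1 - p1)) + A * c
     + (A' * ln A' - A * ln A) / ln (1 - p1).
Proof.
move=> /andP[p10 p11] /andP[p20 p21] c0 Hmin X0 XA A' hA'.
have A0 : 0 < A by apply: lt_le_trans XA.
have lam : ln (1 - p1) < 0 by apply: ln_lt0; apply/andP; split; lra.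
have [XeA|XltA] := eqVneq X A.
  have -> : A' = A by rewrite hA' XeA; ring.
  by rewrite subrr !mul0r add0r subrr mul0r addr0; apply: mulr_ge0; lra.
have XlA : X < A by rewrite lt_neqAle XltA XA.
set z := 1 - X / A.
have z0 : 0 < z by rewrite /z subr_gt0 ltr_pdivrMr // mul1r.
have z1 : z < 1 by rewrite /z ltrBlDr ltrDl divr_gt0.
have H := Hmin z (ltac:(by apply/andP; split)).
rewrite /objective /logb in H.
have e1 : 1 - z = X / A by rewrite /z; ring.
have A'0 : 0 < A' by rewrite hA'; apply: addr_gt0; [apply: mulr_gt0; lra|apply: mulr_gt0].
have e2 : 1 - p2 * z = A' / A by rewrite /z hA'; field; exact: lt0r_neq0.
rewrite e1 e2 in H.
rewrite ln_div ?posrE // ln_div ?posrE // in H.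
have eA : A - A' = A * (p2 * z) by rewrite hA' /z; field; rewrite gt_eqF.
have pz : 0 < A * (p2 * z) by apply: mulr_gt0 => //; apply: mulr_gt0.
have := ler_pM2l pz; move=> /(_ V) => Hm.
rewrite eA; rewrite -Hm in H.
apply: (le_trans H) => {H Hm}.
rewrite le_eqVlt; apply/orP; left; apply/eqP.
have pz' : p2 * z != 0 by apply: lt0r_neq0; apply: mulr_gt0.
have lam' : ln (1 - p1) != 0 by apply: ltr0_neq0.
have eA2 : A' = A - A * (p2 * z) by rewrite -eA; ring.
have An : A != 0 by exact: lt0r_neq0.
rewrite eA2.
field.
by rewrite lam' An !lt0r_neq0.
Qed.

Lemma cont_ln_comp (R : realType) (f : R -> R) (z : R) : 0 < f z ->
  {for z, continuous f} -> {for z, continuous (fun y : R => ln (f y))}.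
Proof.
move=> h hf.
exact: (continuous_comp hf (continuous_ln h)).
Qed.

Lemma obj_cont (R : realType) (p1 p2 c z : R) :
  0 < p2 < 1 -> 0 < z < 1 -> {for z, continuous (objective p1 p2 c)}.
Proof.
move=> /andP[p20 p21] /andP[z0 z1].
rewrite /objective /logb.
apply: continuousD.
  apply: continuousM; last exact: cvg_cst.
  apply: cont_ln_comp; first lra.
  apply: continuousB; [exact: cvg_cst | exact: cvg_id].
apply: continuousM.
  apply: continuousD; first exact: cvg_cst.
  apply: continuousM.
    apply: continuousB; first exact: cvg_cst.
    apply: continuousM; [exact: cvg_cst | exact: cvg_id].
  apply: continuousM; last exact: cvg_cst.
  apply: cont_ln_comp; first (have : p2 * z < 1 by nra); first lra.
  apply: continuousB; first exact: cvg_cst.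
  apply: continuousM; [exact: cvg_cst | exact: cvg_id].
apply: continuousV.
  by rewrite mulf_neq0 // lt0r_neq0.
apply: continuousM; [exact: cvg_cst | exact: cvg_id].
Qed.
Lemma obj_ge (R : realType) (p1 p2 c z : R) :
  0 < p1 < 1 -> 0 < p2 < 1 -> 0 < c -> 0 < z < 1 ->
  c / (p2 * z) <= objective p1 p2 c z /\
  ln (1 - z) / ln (1 - p1) <= objective p1 p2 c z.
Proof.
move=> /andP[p10 p11] /andP[p20 p21] c0 /andP[z0 z1].
have lam : ln (1 - p1) < 0 by apply: ln_lt0; apply/andP; split; lra.
have ilam : (ln (1 - p1))^-1 < 0 by rewrite invr_lt0.
have pz : 0 < p2 * z by apply: mulr_gt0.
have pz1 : p2 * z < 1 by nra.
have T1 : 0 <= ln (1 - z) / ln (1 - p1).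
  apply: mulr_le0; last exact: ltW.
  by apply: ln_le0; lra.
have T2 : 0 <= (1 - p2 * z) * (ln (1 - p2 * z) / ln (1 - p1)) / (p2 * z).
  apply: divr_ge0; last exact: ltW.
  apply: mulr_ge0; first lra.
  apply: mulr_le0; last exact: ltW.
  by apply: ln_le0; lra.
have T3 : 0 <= c / (p2 * z) by apply: divr_ge0; apply: ltW.
rewrite /objective /logb mulrDl; split; lra.
Qed.

Lemma exists_min (R : realType) (p1 p2 c : R) :
  0 < p1 < 1 -> 0 < p2 < 1 -> 0 < c ->
  exists z, 0 < z < 1 /\
    (forall z', 0 < z' < 1 -> objective p1 p2 c z <= objective p1 p2 c z').
Proof.
move=> hp1 hp2 c0.
have /andP[p10 p11] := hp1; have /andP[p20 p21] := hp2.
have lam : ln (1 - p1) < 0 by apply: ln_lt0; apply/andP; split; lra.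
set M := objective p1 p2 c (1/2).
set B := `|M| + 1.
have B0 : 0 < B by rewrite /B; have := normr_ge0 M; lra.
have MB : M < B by rewrite /B; have := ler_norm M; lra.
set d1 := Num.min (1/2) (c / (p2 * B)).
set d2 := Num.min (1/2) (expR (B * ln (1 - p1))).
have d1h : d1 <= 1/2 by rewrite /d1 ge_min lexx.
have d2h : d2 <= 1/2 by rewrite /d2 ge_min lexx.
have d1p : 0 < d1 by rewrite /d1 lt_min; apply/andP; split; [lra|
  apply: divr_gt0 => //; apply: mulr_gt0].
have d2p : 0 < d2 by rewrite /d2 lt_min; apply/andP; split; [lra| exact: expR_gt0].
have ab : d1 <= 1 - d2 by lra.
have cont : ({within `[d1, 1 - d2], continuous (objective p1 p2 c)})%classic.
  apply: continuous_in_subspaceT => t; rewrite inE /= in_itv /= => /andP[t1 t2].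
  apply: obj_cont => //; apply/andP; split; lra.
have [zm zin zmin] := EVT_min ab cont.
move: (zin); rewrite in_itv /= => /andP[zm1 zm2].
exists zm; split; first (apply/andP; split; lra).
move=> z' hz'; have /andP[z0 z1] := hz'.
have [hg1 hg2] := obj_ge hp1 hp2 c0 hz'.
have zmM : objective p1 p2 c zm <= M.
  by apply: zmin; rewrite in_itv /=; apply/andP; split; lra.
have [zlo|zhi] := ltP z' d1.
  have : z' < c / (p2 * B) by apply: (lt_le_trans zlo); rewrite /d1 ge_min lexx orbT.
  rewrite ltr_pdivlMr; last by apply: mulr_gt0.
  move=> h.
  have : B < c / (p2 * z').
    rewrite ltr_pdivlMr; last by apply: mulr_gt0.
    lra.
  lra.
have [zhi2|zlo2] := leP z' (1 - d2).
  by apply: zmin; rewrite in_itv /=; apply/andP; split.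
have h1 : 1 - z' < expR (B * ln (1 - p1)).
  apply: (lt_le_trans (y := d2)); first lra.
  by rewrite /d2 ge_min lexx orbT.
have h2 : ln (1 - z') < B * ln (1 - p1).
  by rewrite -ltr_expR lnK // posrE; lra.
have : B < ln (1 - z') / ln (1 - p1).
  by rewrite ltr_ndivlMr //.
lra.
Qed.
Lemma usum0 (R : realType) (pi : nat -> R) : Usum pi 0 = 0.
Proof. by rewrite /Usum big_ord0. Qed.

Lemma usumS (R : realType) (pi : nat -> R) n : Usum pi n.+1 = Usum pi n + pi n.
Proof. by rewrite /Usum big_ord_recr. Qed.

Lemma usum_ge0 (R : realType) (pi : nat -> R) n : semi_fractional pi -> 0 <= Usum pi n.
Proof. by move=> h; rewrite /Usum sumr_ge0. Qed.

Lemma closed1_0 (R : realType) (p1 : R) (pi : nat -> R) : closed1 p1 pi 0 = 1.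
Proof. by rewrite /closed1 usum0 powRr0. Qed.

Lemma closed1S (R : realType) (p1 : R) (pi : nat -> R) n : p1 < 1 ->
  closed1 p1 pi n.+1 = closed1 p1 pi n * (1 - p1) `^ (pi n).
Proof.
move=> h; rewrite /closed1 usumS powRD //; apply/implyP => _.
by rewrite subr_eq0 eq_sym lt_eqF.
Qed.

Lemma closed1_gt0 (R : realType) (p1 : R) (pi : nat -> R) n : p1 < 1 ->
  0 < closed1 p1 pi n.
Proof. by move=> h; rewrite /closed1 powR_gt0 // subr_gt0. Qed.

Lemma powR_le1' (R : realType) (q t : R) : 0 < q <= 1 -> 0 <= t -> q `^ t <= 1.
Proof. by move=> hq ht; rewrite -(powRr0 q); apply: ger_powR. Qed.

Lemma closed1_dec (R : realType) (p1 : R) (pi : nat -> R) n : 0 < p1 < 1 ->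
  semi_fractional pi -> closed1 p1 pi n.+1 <= closed1 p1 pi n.
Proof.
move=> /andP[h0 h1] hs; rewrite closed1S //.
rewrite -[X in _ <= X]mulr1 ler_wpM2l //; first exact: ltW (closed1_gt0 _ _ h1).
apply: powR_le1' => //; apply/andP; split; lra.
Qed.

Lemma closed1_mono (R : realType) (p1 : R) (pi : nat -> R) n d : 0 < p1 < 1 ->
  semi_fractional pi -> closed1 p1 pi (n + d) <= closed1 p1 pi n.
Proof.
move=> h hs; elim: d => [|d IH]; first by rewrite addn0.
by rewrite addnS; apply: le_trans IH; apply: closed1_dec.
Qed.

Lemma ln_closed1 (R : realType) (p1 : R) (pi : nat -> R) n :
  ln (closed1 p1 pi n) = Usum pi n * ln (1 - p1).
Proof. by rewrite /closed1 ln_powR. Qed.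

Fixpoint aa (R : realType) (p1 p2 : R) (pi : nat -> R) (n : nat) : R :=
  match n with
  | 0 => 1
  | m.+1 => (1 - p2) * aa p1 p2 pi m + p2 * closed1 p1 pi m.+1
  end.

Lemma prob_run1 (R : realType) (p1 p2 : R) (pi : nat -> R) :
  prob_run p1 p2 pi 1 = first_open p1 pi 1 * p2.
Proof. by rewrite /prob_run big_nat1 subnn expr0 mulr1. Qed.

Lemma prob_runSS (R : realType) (p1 p2 : R) (pi : nat -> R) n :
  prob_run p1 p2 pi n.+2 =
  (1 - p2) * prob_run p1 p2 pi n.+1 + first_open p1 pi n.+2 * p2.
Proof.
rewrite /prob_run big_nat_recr //= subnn expr0 mulr1; congr (_ + _).
rewrite big_distrr /=; apply: eq_big_nat => k /andP[k1 kn].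
by rewrite subSn // exprS; ring.
Qed.

Lemma prob_run_aa (R : realType) (p1 p2 : R) (pi : nat -> R) n :
  prob_run p1 p2 pi n.+1 = aa p1 p2 pi n - aa p1 p2 pi n.+1.
Proof.
elim: n => [|n IH].
  by rewrite prob_run1 /first_open /= closed1_0; ring.
rewrite prob_runSS IH /first_open /=; ring.
Qed.

Lemma aa_props (R : realType) (p1 p2 : R) (pi : nat -> R) n :
  0 < p1 < 1 -> 0 < p2 < 1 -> semi_fractional pi ->
  closed1 p1 pi n <= aa p1 p2 pi n /\ aa p1 p2 pi n <= 1.
Proof.
move=> hp1 /andP[p20 p21] hs; have /andP[_ p11] := hp1.
elim: n => [|n [IH1 IH2]]; first by rewrite closed1_0 /=; split.
have hx := closed1_dec n hp1 hs.
have hx0 := closed1_gt0 pi n.+1 p11.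
have hc1 : closed1 p1 pi n <= 1 by lra.
rewrite /=; split; nra.
Qed.

Lemma aa_gt0 (R : realType) (p1 p2 : R) (pi : nat -> R) n :
  0 < p1 < 1 -> 0 < p2 < 1 -> semi_fractional pi -> 0 < aa p1 p2 pi n.
Proof.
move=> hp1 hp2 hs; have [h _] := aa_props n hp1 hp2 hs.
have /andP[_ p11] := hp1.
exact: lt_le_trans (closed1_gt0 _ _ p11) h.
Qed.

Lemma aa_dec (R : realType) (p1 p2 : R) (pi : nat -> R) n :
  0 < p1 < 1 -> 0 < p2 < 1 -> semi_fractional pi ->
  aa p1 p2 pi n.+1 <= aa p1 p2 pi n.
Proof.
move=> hp1 hp2 hs; have /andP[p20 p21] := hp2.
have [h1 _] := aa_props n hp1 hp2 hs.
have hx := closed1_dec n hp1 hs.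
rewrite /=; nra.
Qed.

Lemma aa_bound (R : realType) (p1 p2 : R) (pi : nat -> R) K d :
  0 < p1 < 1 -> 0 < p2 < 1 -> semi_fractional pi ->
  aa p1 p2 pi (K + d) <= closed1 p1 pi K + (1 - p2) ^+ d.
Proof.
move=> hp1 hp2 hs; have /andP[p20 p21] := hp2.
elim: d => [|d IH].
  rewrite addn0 expr0; have [_ h] := aa_props K hp1 hp2 hs.
  have /andP[_ p11] := hp1; have := closed1_gt0 pi K p11; lra.
rewrite addnS /= exprS.
have hx := closed1_mono K d.+1 hp1 hs; rewrite addnS in hx.
have hq : 0 <= 1 - p2 by lra.
have := ler_wpM2l hq IH.
nra.
Qed.

Lemma tau0 (R : realType) (c : R) (pi : nat -> R) : tau c pi 0 = 0.
Proof. by rewrite /tau usum0 mul0r addr0. Qed.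

Lemma tauS (R : realType) (c : R) (pi : nat -> R) n :
  tau c pi n.+1 = tau c pi n + pi n + c.
Proof. by rewrite /tau usumS -addn1 natrD; ring. Qed.

Lemma tau_ge0 (R : realType) (c : R) (pi : nat -> R) n :
  0 < c -> semi_fractional pi -> 0 <= tau c pi n.
Proof.
move=> c0 hs; rewrite /tau; apply: addr_ge0; first exact: usum_ge0.
by apply: mulr_ge0 => //; exact: ltW.
Qed.

Lemma tau_mono (R : realType) (c : R) (pi : nat -> R) n d :
  0 < c -> semi_fractional pi -> tau c pi n <= tau c pi (n + d).
Proof.
move=> c0 hs; elim: d => [|d IH]; first by rewrite addn0.
rewrite addnS tauS; have := hs (n + d)%N; lra.
Qed.

Definition Psi (R : realType) (p1 p2 c : R) (pi : nat -> R) (V : R) n :=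
  aa p1 p2 pi n * V - aa p1 p2 pi n * Usum pi n
  + aa p1 p2 pi n * ln (aa p1 p2 pi n) / ln (1 - p1) + aa p1 p2 pi n * tau c pi n.

Definition TT (R : realType) (p1 p2 c : R) (pi : nat -> R) N :=
  \sum_(0 <= n < N) tau c pi n.+1 * prob_run p1 p2 pi n.+1.

Lemma Psi0 (R : realType) (p1 p2 c : R) (pi : nat -> R) V :
  Psi p1 p2 c pi V 0 = V.
Proof. by rewrite /Psi /= usum0 tau0 ln1; ring. Qed.

Lemma TTS (R : realType) (p1 p2 c : R) (pi : nat -> R) N :
  TT p1 p2 c pi N.+1 = TT p1 p2 c pi N + tau c pi N.+1 * prob_run p1 p2 pi N.+1.
Proof. by rewrite /TT big_nat_recr. Qed.

Lemma Psi_step (R : realType) (p1 p2 c : R) (pi : nat -> R) V n :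
  0 < p1 < 1 -> 0 < p2 < 1 -> 0 < c -> semi_fractional pi ->
  (forall z, 0 < z < 1 -> V <= objective p1 p2 c z) ->
  Psi p1 p2 c pi V n - Psi p1 p2 c pi V n.+1 <=
  tau c pi n.+1 * (aa p1 p2 pi n - aa p1 p2 pi n.+1).
Proof.
move=> hp1 hp2 c0 hs hmin.
have /andP[p10 p11] := hp1.
have lam : ln (1 - p1) < 0 by apply: ln_lt0; apply/andP; split; lra.
have X0 := closed1_gt0 pi n.+1 p11.
have [XA _] := aa_props n hp1 hp2 hs.
have XA' : closed1 p1 pi n.+1 <= aa p1 p2 pi n.
  exact: le_trans (closed1_dec n hp1 hs) XA.
have := step_ineq hp1 hp2 c0 hmin X0 XA' (erefl _).
rewrite -/(aa p1 p2 pi n.+1).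
rewrite ln_closed1 mulfK; last exact: ltr0_neq0.
rewrite /Psi usumS tauS.
set A := aa p1 p2 pi n; set A' := aa p1 p2 pi n.+1.
set U := Usum pi n; set t := pi n; set T := tau c pi n.
set l := ln (1 - p1).
set LA := A * ln A / l; set LA' := A' * ln A' / l.
move=> h.
have e : (A' * ln A' - A * ln A) / l = LA' - LA by rewrite /LA /LA'; field; exact: ltr0_neq0.
rewrite e in h.
nra.
Qed.

Lemma TT_ge (R : realType) (p1 p2 c : R) (pi : nat -> R) V N :
  0 < p1 < 1 -> 0 < p2 < 1 -> 0 < c -> semi_fractional pi ->
  (forall z, 0 < z < 1 -> V <= objective p1 p2 c z) ->
  V - Psi p1 p2 c pi V N <= TT p1 p2 c pi N.
Proof.
move=> hp1 hp2 c0 hs hmin.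
elim: N => [|N IH]; first by rewrite Psi0 /TT big_geq // subrr.
rewrite TTS prob_run_aa.
have := Psi_step N hp1 hp2 c0 hs hmin; lra.
Qed.

Lemma Psi_le (R : realType) (p1 p2 c : R) (pi : nat -> R) V N :
  0 < p1 < 1 -> 0 < p2 < 1 -> semi_fractional pi ->
  Psi p1 p2 c pi V N <= aa p1 p2 pi N * V + aa p1 p2 pi N * tau c pi N.
Proof.
move=> hp1 hp2 hs.
have /andP[p10 p11] := hp1.
have lam : ln (1 - p1) < 0 by apply: ln_lt0; apply/andP; split; lra.
have A0 := aa_gt0 N hp1 hp2 hs.
have [XA _] := aa_props N hp1 hp2 hs.
have X0 := closed1_gt0 pi N p11.
have hl : ln (closed1 p1 pi N) <= ln (aa p1 p2 pi N) by rewrite ler_ln ?posrE.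
rewrite ln_closed1 in hl.
have : ln (aa p1 p2 pi N) / ln (1 - p1) <= Usum pi N.
  by rewrite ler_ndivrMr.
move=> h.
have := ler_wpM2l (ltW A0) h.
rewrite /Psi mulrA; lra.
Qed.

Lemma TT_mono (R : realType) (p1 p2 c : R) (pi : nat -> R) N d :
  0 < p1 < 1 -> 0 < p2 < 1 -> 0 < c -> semi_fractional pi ->
  TT p1 p2 c pi N + tau c pi N * (aa p1 p2 pi N - aa p1 p2 pi (N + d))
  <= TT p1 p2 c pi (N + d).
Proof.
move=> hp1 hp2 c0 hs.
elim: d => [|d IH]; first by rewrite addn0 subrr mulr0 addr0.
rewrite addnS TTS prob_run_aa.
have h1 := tau_mono N d.+1 c0 hs; rewrite addnS in h1.
have h2 := aa_dec (N + d) hp1 hp2 hs.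
have h0 := tau_ge0 N c0 hs.
have := ler_wpM2r (x := aa p1 p2 pi (N + d) - aa p1 p2 pi (N + d).+1)
  (ltac:(lra)) h1.
lra.
Qed.

Lemma TT_bound (R : realType) (p1 p2 c : R) (pi : nat -> R) V N d :
  0 < p1 < 1 -> 0 < p2 < 1 -> 0 < c -> semi_fractional pi ->
  (forall z, 0 < z < 1 -> V <= objective p1 p2 c z) ->
  V - aa p1 p2 pi N * V - tau c pi N * aa p1 p2 pi (N + d) <= TT p1 p2 c pi (N + d).
Proof.
move=> hp1 hp2 c0 hs hmin.
have := TT_mono N d hp1 hp2 c0 hs.
have := TT_ge N hp1 hp2 c0 hs hmin.
have := Psi_le c V N hp1 hp2 hs.
lra.
Qed.

Lemma cvg0_small (R : realType) (u : nat -> R) : (u @ \oo --> 0)%classic ->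
  forall e, 0 < e -> forall N, exists K, (N <= K)%N /\ u K <= e.
Proof.
move/cvgr0Pnorm_lt => H e e0 N.
have [K _ HK] := H e e0.
exists (maxn N K); split; first exact: leq_maxl.
have := HK (maxn N K) (leq_maxr N K) => /= h.
exact: le_trans (ler_norm _) (ltW h).
Qed.

Lemma aa_small (R : realType) (p1 p2 : R) (pi : nat -> R) :
  0 < p1 < 1 -> 0 < p2 < 1 -> semi_fractional pi ->
  (closed1 p1 pi @ \oo --> 0)%classic ->
  forall e, 0 < e -> forall N, exists M, (N <= M)%N /\ aa p1 p2 pi M <= e.
Proof.
move=> hp1 hp2 hs hx e e0 N.
have /andP[p20 p21] := hp2.
have e20 : 0 < e / 2 by apply: divr_gt0.
have [K [NK hK]] := cvg0_small hx e20 N.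
have hq : ((GRing.exp (1 - p2) : R ^nat) @ \oo --> 0)%classic.
  by apply: cvg_expr; rewrite ger0_norm; lra.
have [d [_ hd]] := cvg0_small hq e20 0.
exists (K + d)%N; split; first exact: leq_trans NK (leq_addr _ _).
have := aa_bound K d hp1 hp2 hs; rewrite /= in hd; lra.
Qed.

Lemma prob_run_ge0 (R : realType) (p1 p2 : R) (pi : nat -> R) n :
  0 < p1 < 1 -> 0 < p2 < 1 -> semi_fractional pi -> 0 <= prob_run p1 p2 pi n.+1.
Proof.
move=> hp1 hp2 hs; rewrite prob_run_aa subr_ge0; exact: aa_dec.
Qed.

Lemma closed1_cvg (R : realType) (p1 : R) (pi : nat -> R) :
  0 < p1 < 1 -> semi_fractional pi ->
  (closed1 p1 pi @ \oo --> prob_never p1 pi)%classic /\ 0 <= prob_never p1 pi.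
Proof.
move=> hp1 hs; have /andP[_ p11] := hp1.
have hdec : nonincreasing_seq (closed1 p1 pi).
  by move=> n m nm; rewrite -(subnKC nm); apply: closed1_mono.
have hcv : cvgn (closed1 p1 pi).
  apply: nonincreasing_is_cvgn => //; exists 0 => _ [n _ <-].
  exact: ltW (closed1_gt0 _ _ p11).
split; first exact: hcv.
apply: limr_ge => //; apply: nearW => n; exact: ltW (closed1_gt0 _ _ p11).
Qed.

Lemma lower_bound (R : realType) (p1 p2 c : R) (pi : nat -> R) V :
  0 < p1 < 1 -> 0 < p2 < 1 -> 0 < c -> semi_fractional pi ->
  (forall z, 0 < z < 1 -> V <= objective p1 p2 c z) -> 0 <= V ->
  (V%:E <= expected_time p1 p2 c pi)%E.
Proof.
move=> hp1 hp2 c0 hs hmin V0.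
rewrite /expected_time.
set S := (\sum_(0 <= n <oo) _)%E.
have f0 : forall n, 0 <= tau c pi n.+1 * prob_run p1 p2 pi n.+1.
  by move=> n; apply: mulr_ge0; [exact: tau_ge0 | exact: prob_run_ge0].
have S0 : (0 <= S)%E by apply: nneseries_ge0 => n _ _; rewrite lee_fin.
have [hcv pn0] := closed1_cvg hp1 hs.
have [pnpos|pnle] := ltP 0 (prob_never p1 pi).
  rewrite gt0_mulye ?lte_fin // addey ?leey //.
  by rewrite gt_eqF // (lt_le_trans ltNy0 S0).
have pn : prob_never p1 pi = 0 by apply/eqP; rewrite eq_le pnle pn0.
rewrite pn mule0 adde0.
rewrite pn in hcv.
apply/lee_addgt0Pr => e e0.
have eV : 0 < e / (2 * (V + 1)) by apply: divr_gt0 => //; lra.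
have [N0 [_ hN0]] := aa_small hp1 hp2 hs hcv eV 0.
have hT := tau_ge0 N0 c0 hs.
have eT : 0 < e / (2 * (tau c pi N0 + 1)) by apply: divr_gt0 => //; lra.
have [M [NM hM]] := aa_small hp1 hp2 hs hcv eT N0.
rewrite ler_pdivlMr in hN0; last lra.
rewrite ler_pdivlMr in hM; last lra.
have A0 := aa_gt0 N0 hp1 hp2 hs.
have AM := aa_gt0 M hp1 hp2 hs.
have hb := TT_bound N0 (M - N0) hp1 hp2 c0 hs hmin.
rewrite subnKC // in hb.
have hTT : V - e <= TT p1 p2 c pi M by nra.
rewrite -[V](subrK e) EFinD leeD2r //.
apply: le_trans (_ : (TT p1 p2 c pi M)%:E <= S)%E; first by rewrite lee_fin.
rewrite /TT -sumEFin; apply: nneseries_lim_ge => n _ _; rewrite lee_fin.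
exact: f0.
Qed.

Lemma powR_logb (R : realType) (p1 y : R) : 0 < p1 < 1 -> 0 < y ->
  (1 - p1) `^ (ln y / ln (1 - p1)) = y.
Proof.
move=> /andP[p10 p11] y0.
have lam : ln (1 - p1) < 0 by apply: ln_lt0; apply/andP; split; lra.
rewrite /powR ifF; last by apply/negbTE; rewrite subr_eq0 eq_sym lt_eqF.
by rewrite mulfVK ?ltr0_neq0 // lnK ?posrE.
Qed.

Lemma logb_gt0 (R : realType) (p1 y : R) : 0 < p1 < 1 -> 0 < y < 1 ->
  0 < ln y / ln (1 - p1).
Proof.
move=> /andP[p10 p11] hy.
have lam : ln (1 - p1) < 0 by apply: ln_lt0; apply/andP; split; lra.
by rewrite nmulr_rgt0 ?invr_lt0 // ln_lt0.
Qed.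

Lemma periodic_facts (R : realType) (p1 p2 c z : R) :
  0 < p1 < 1 -> 0 < p2 < 1 -> 0 < c -> 0 < z < 1 ->
  let s := ln (1 - z) / ln (1 - p1) in
  let t := ln (1 - p2 * z) / ln (1 - p1) in
  let pi := periodic_seq s t in
  [/\ 0 < s, 0 < t & semi_fractional pi] /\
  [/\ (forall n, closed1 p1 pi n.+1 = (1 - z) * (1 - p2 * z) ^+ n),
      (forall n, aa p1 p2 pi n = (1 - p2 * z) ^+ n) &
      (forall n, tau c pi n.+1 = s + n%:R * t + n.+1%:R * c)].
Proof.
move=> hp1 hp2 c0 hz s t pi.
have /andP[p10 p11] := hp1; have /andP[p20 p21] := hp2; have /andP[z0 z1] := hz.
have pz0 : 0 < p2 * z by apply: mulr_gt0.
have pz1 : p2 * z < 1 by nra.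
have s0 : 0 < s by apply: logb_gt0 => //; apply/andP; split; lra.
have t0 : 0 < t by apply: logb_gt0 => //; apply/andP; split; lra.
have hs : semi_fractional pi by move=> j; rewrite /pi /periodic_seq; case: (j == 0)%N; lra.
have hx : forall n, closed1 p1 pi n.+1 = (1 - z) * (1 - p2 * z) ^+ n.
  elim=> [|n IH].
    by rewrite closed1S // closed1_0 /pi /periodic_seq /= powR_logb //; [ring|lra].
  rewrite closed1S // IH /pi /periodic_seq /= powR_logb //; last lra.
  by rewrite exprS; ring.
have ha : forall n, aa p1 p2 pi n = (1 - p2 * z) ^+ n.
  elim=> [|n IH]; first by [].
  by rewrite /= IH hx exprS; ring.
split; first by split.
split => //.
elim=> [|n IH].
  by rewrite tauS tau0 /pi /periodic_seq /=; ring.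
rewrite tauS IH /pi /periodic_seq /= -[n.+2]addn1 -[n.+1]addn1 !natrD; ring.
Qed.

Lemma periodic_upper (R : realType) (p1 p2 c z : R) :
  0 < p1 < 1 -> 0 < p2 < 1 -> 0 < c -> 0 < z < 1 ->
  (expected_time p1 p2 c
     (periodic_seq (ln (1 - z) / ln (1 - p1)) (ln (1 - p2 * z) / ln (1 - p1)))
   <= (objective p1 p2 c z)%:E)%E.
Proof.
move=> hp1 hp2 c0 hz.
have [[s0 t0 hs] [hx ha htau]] := periodic_facts hp1 hp2 c0 hz.
set s := ln (1 - z) / ln (1 - p1) in s0 t0 hs hx ha htau *.
set t := ln (1 - p2 * z) / ln (1 - p1) in s0 t0 hs hx ha htau *.
set pi := periodic_seq s t in hs hx ha htau *.
have /andP[p10 p11] := hp1; have /andP[p20 p21] := hp2; have /andP[z0 z1] := hz.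
have pz0 : 0 < p2 * z by apply: mulr_gt0.
have pz1 : p2 * z < 1 by nra.
have hcv : (closed1 p1 pi @ \oo --> 0)%classic.
  rewrite -cvg_shiftS.
  have -> : [sequence closed1 p1 pi n.+1]_n = geometric (1 - z) (1 - p2 * z).
    by apply/funext => n; rewrite /= hx.
  by apply: cvg_geometric; rewrite ger0_norm; lra.
have pn : prob_never p1 pi = 0 by exact: cvg_lim hcv.
rewrite /expected_time pn mule0 adde0.
set V := objective p1 p2 c z.
have [hV _] := obj_ge hp1 hp2 c0 hz.
have V0 : 0 <= V by apply: le_trans hV; apply: divr_ge0; lra.
have eV : V = s + (c + (1 - p2 * z) * t) / (p2 * z) by [].
have hTT : forall N, TT p1 p2 c pi N = V - (1 - p2 * z) ^+ N * (V + N%:R * (t + c)).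
  elim=> [|N IH]; first by rewrite /TT big_geq // expr0; ring.
  rewrite TTS IH prob_run_aa !ha htau exprS eV -[N.+1]addn1 natrD.
  by field; rewrite !lt0r_neq0.
have f0 : forall n, 0 <= tau c pi n.+1 * prob_run p1 p2 pi n.+1.
  by move=> n; apply: mulr_ge0; [exact: tau_ge0 | exact: prob_run_ge0].
apply: lime_le; first by apply: is_cvg_nneseries => n _ _; rewrite lee_fin.
apply: nearW => N; rewrite sumEFin lee_fin -/(TT p1 p2 c pi N) hTT.
have : 0 <= (1 - p2 * z) ^+ N * (V + N%:R * (t + c)).
  apply: mulr_ge0; first by apply: exprn_ge0; lra.
  by apply: addr_ge0 => //; apply: mulr_ge0 => //; lra.
lra.
Qed.

Unset Implicit Arguments.

Theorem mainTheorem14 (R : realType) (p1 p2 c : R) :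
  0 < p1 < 1 -> 0 < p2 < 1 -> 0 < c ->
  exists s t : R, 0 < s /\ 0 < t /\
    (forall pi : nat -> R, semi_fractional pi ->
       (expected_time p1 p2 c (periodic_seq s t) <= expected_time p1 p2 c pi)%E) /\
    exists z : R, 0 < z < 1 /\
      expected_time p1 p2 c (periodic_seq s t) = (objective p1 p2 c z)%:E /\
      (forall z' : R, 0 < z' < 1 -> objective p1 p2 c z <= objective p1 p2 c z').
Proof.
move=> hp1 hp2 c0.
have [z [hz zmin]] := exists_min hp1 hp2 c0.
have [[s0 t0 hs] _] := periodic_facts hp1 hp2 c0 hz.
have [hV _] := obj_ge hp1 hp2 c0 hz.
have /andP[p20 _] := hp2; have /andP[z0 _] := hz.
have V0 : 0 <= objective p1 p2 c z.
  by apply: le_trans hV; apply: divr_ge0; [exact: ltW | apply: ltW; apply: mulr_gt0].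
have heq : expected_time p1 p2 c
     (periodic_seq (ln (1 - z) / ln (1 - p1)) (ln (1 - p2 * z) / ln (1 - p1)))
   = (objective p1 p2 c z)%:E.
  apply/le_anti/andP; split; first exact: periodic_upper.
  exact: lower_bound.
exists (ln (1 - z) / ln (1 - p1)), (ln (1 - p2 * z) / ln (1 - p1)).
split => //; split => //; split.
  by move=> pi hpi; rewrite heq; apply: lower_bound.
by exists z.
Qed.
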